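(* Let $L:\mathbb{R}^d\times\mathbb{R}^{d+1}\to\mathbb{R}$ be such that $L(w,z)$ is convex in $w$ for every $z$, let $\nabla_1 L(w,z)$ denote a (fixed choice of) sub-gradient of $L(\cdot,z)$ at $w$, and assume there are constants $A,B\ge0$ with $\|\nabla_1 L(w,z)\|^2\le A L(w,z)+B$ for all $w\in\mathbb{R}^d$, $z\in\mathbb{R}^{d+1}$. Let $z_1,\dots,z_n\in\mathbb{R}^{d+1}$ be training data, let $g\ge 0$, and let $\eta>0$ with $1-0.5A\eta>0$. For $w\in\mathbb{R}^d$ and $\gamma\ge0$ set \[ R(w,\gamma)=\frac1n\sum_{i=1}^n L(w,z_i)+\gamma\|w\|_1 .\] Let $\hat w_1=w_1=0$ and define recursively for $t=1,2,\ldots$ \[ w_{t+1}=T\big(w_t-\eta\nabla_1 L(w_t,z_{i_t}),\ g\eta\big),\qquad \hat w_{t+1}=\hat w_t+\frac{w_{t+1}-\hat w_t}{t+1}, \] where $i_1,i_2,\ldots$ are independent and each uniformly distributed on $\{1,\dots,n\}$. Then for every $T\ge1$ and every $\bar w\in\mathbb{R}^d$, \[ \mathbf{E}_{i_1,\dots,i_T}\Big[(1-0.5A\eta)\,R\Big(\hat w_T,\tfrac{g}{1-0.5A\eta}\Big)\Big] \le \mathbf{E}_{i_1,\dots,i_T}\Big[\frac{1-0.5A\eta}{T}\sum_{i=1}^T R\Big(w_i,\tfrac{g}{1-0.5A\eta}\Big)\Big] \le \frac{\eta}{2}B+\frac{\|\bar w\|^2}{2\eta T}+R(\bar w,g). 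\]
   Context: $\|\cdot\|$ is the Euclidean norm and $\|\cdot\|_1$ the $1$-norm. For $v\in\mathbb{R}^d$ and $\alpha\ge0$, $T(v,\alpha)=(T(v_1,\alpha),\dots,T(v_d,\alpha))$ with $T(v_j,\alpha)=\max(0,v_j-\alpha)$ if $v_j>0$ and $T(v_j,\alpha)=\min(0,v_j+\alpha)$ otherwise. *)

(* Defs.v *)
(* R an abstract realFieldType (the statement is purely algebraic). *)
From HB Require Import structures.
From mathcomp Require Import all_boot all_order all_algebra.
Set Implicit Arguments. Unset Strict Implicit. Unset Printing Implicit Defensive.
Import Order.TTheory GRing.Theory Num.Theory.
Local Open Scope ring_scope.

Section Defs.
Variable R : realFieldType.

Definition sqnorm (d : nat) (v : 'rV[R]_d) : R := \sum_(j < d) v 0 j ^+ 2.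
Definition norm1 (d : nat) (v : 'rV[R]_d) : R := \sum_(j < d) `|v 0 j|.
Definition dotv (d : nat) (u v : 'rV[R]_d) : R := \sum_(j < d) u 0 j * v 0 j.

Definition soft1 (x alpha : R) : R :=
  if 0 < x then Num.max 0 (x - alpha) else Num.min 0 (x + alpha).
Definition softT (d : nat) (v : 'rV[R]_d) (alpha : R) : 'rV[R]_d :=
  \row_(j < d) soft1 (v 0 j) alpha.

Definition convex_fun (d : nat) (f : 'rV[R]_d -> R) : Prop :=
  forall (u v : 'rV[R]_d) (t : R), 0 <= t -> t <= 1 ->
    f (t *: u + (1 - t) *: v) <= t * f u + (1 - t) * f v.

Definition risk (d n : nat) (L : 'rV[R]_d -> 'rV[R]_d.+1 -> R)
  (z : 'I_n -> 'rV[R]_d.+1) (w : 'rV[R]_d) (gam : R) : R :=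
  (\sum_(i < n) L w (z i)) / n%:R + gam * norm1 w.

(* iterates: iter_w k = w_{k+1}, iter_hat k = hat w_{k+1};
   zs k is the data point z_{i_{k+1}} used at step k+1 *)
Fixpoint iter_w (d : nat) (grad : 'rV[R]_d -> 'rV[R]_d.+1 -> 'rV[R]_d)
  (g eta : R) (zs : nat -> 'rV[R]_d.+1) (k : nat) : 'rV[R]_d :=
  match k with
  | 0 => 0
  | k'.+1 => let w := iter_w grad g eta zs k' in
             softT (w - eta *: grad w (zs k')) (g * eta)
  end.

Fixpoint iter_hat (d : nat) (grad : 'rV[R]_d -> 'rV[R]_d.+1 -> 'rV[R]_d)
  (g eta : R) (zs : nat -> 'rV[R]_d.+1) (k : nat) : 'rV[R]_d :=
  match k with
  | 0 => 0
  | k'.+1 => let h := iter_hat grad g eta zs k' in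
             h + (k'.+2%:R)^-1 *: (iter_w grad g eta zs k'.+1 - h)
  end.

Definition data_seq (d n T : nat) (z : 'I_n -> 'rV[R]_d.+1)
  (f : {ffun 'I_T -> 'I_n}) (k : nat) : 'rV[R]_d.+1 :=
  if insub k is Some i then z (f i) else 0.

(* expectation over i_1,...,i_T independent and uniform on {1..n} *)
Definition Eunif (n T : nat) (X : {ffun 'I_T -> 'I_n} -> R) : R :=
  (\sum_(f : {ffun 'I_T -> 'I_n}) X f) / (n ^ T)%:R.

End Defs.

(* Main.v *)
Require Import Defs.
From HB Require Import structures.
From mathcomp Require Import all_boot all_order all_algebra.
From mathcomp Require Import lra ring.
Import Order.TTheory GRing.Theory Num.Theory.
Local Open Scope ring_scope.
Set Implicit Arguments. Unset Strict Implicit.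

Section H1.
Variable R : realFieldType.

Lemma soft1_ineq (x a b : R) : 0 <= a ->
  (soft1 x a - b) ^+ 2 <= (x - b) ^+ 2 + 2 * a * (`|b| - `|soft1 x a|).
Proof.
move=> ha; rewrite /soft1.
have [hb|hb] := lerP 0 b; [rewrite (ger0_norm hb)|rewrite (ltr0_norm hb)];
(case: ifP => hx; [move: hx => hx | move/negbT: hx; rewrite -leNgt => hx]);
rewrite ?maxEle ?minEle; (case: ifP => h; [move: h => h | move/negbT: h; rewrite -ltNge => h]);
rewrite ?normr0 //=; 
try (rewrite ger0_norm; last lra; nra); try (rewrite ler0_norm; last lra; nra); try nra.
Qed.
End H1.

Section H.
Variable R : realFieldType.

Lemma step_ineq d (w wb gr : 'rV[R]_d) (eta a : R) : 0 <= a ->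
  sqnorm (softT (w - eta *: gr) a - wb) <=
  sqnorm (w - wb) - 2 * eta * dotv gr (w - wb) + eta ^+ 2 * sqnorm gr
  + 2 * a * (norm1 wb - norm1 (softT (w - eta *: gr) a)).
Proof.
move=> ha; rewrite /sqnorm /dotv /norm1 -sumrB !mulr_sumr -sumrB -!big_split /=.
apply: ler_sum => j _; rewrite !mxE.
have := @soft1_ineq R (w 0 j - eta * gr 0 j) a (wb 0 j) ha.
set s := soft1 _ _; set nb := `|_|; set ns := `|s|.
move=> h; apply: (le_trans h); rewrite le_eqVlt; apply/orP; left; apply/eqP; ring.
Qed.

Lemma norm1_ge0 d (v : 'rV[R]_d) : 0 <= norm1 v.
Proof. by apply: sumr_ge0 => j _; exact: normr_ge0. Qed.
Lemma sqnorm_ge0 d (v : 'rV[R]_d) : 0 <= sqnorm v.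
Proof. by apply: sumr_ge0 => j _; exact: sqr_ge0. Qed.
End H.

Section H3.
Variable R : realFieldType.

Lemma dotvN d (u v w : 'rV[R]_d) : dotv u (v - w) = - dotv u (w - v).
Proof. rewrite /dotv -sumrN; apply: eq_bigr => j _; rewrite !mxE; ring. Qed.

Lemma sqnorm0N d (v : 'rV[R]_d) : sqnorm (0 - v) = sqnorm v.
Proof. rewrite /sqnorm; apply: eq_bigr => j _; rewrite !mxE; ring. Qed.

Lemma norm10 d : norm1 (0 : 'rV[R]_d) = 0.
Proof. rewrite /norm1 big1 // => j _; by rewrite mxE normr0. Qed.

Lemma path_bound d (L : 'rV[R]_d -> 'rV[R]_d.+1 -> R)
  (grad : 'rV[R]_d -> 'rV[R]_d.+1 -> 'rV[R]_d) (A B g eta : R)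
  (zs : nat -> 'rV[R]_d.+1) (wb : 'rV[R]_d) :
  (forall (w v : 'rV[R]_d) (zz : 'rV[R]_d.+1),
      L w zz + dotv (grad w zz) (v - w) <= L v zz) ->
  (forall (w : 'rV[R]_d) (zz : 'rV[R]_d.+1),
      sqnorm (grad w zz) <= A * L w zz + B) ->
  0 <= g -> 0 < eta -> forall T : nat,
  \sum_(k < T) (2 * eta * ((1 - A * eta / 2) * L (iter_w grad g eta zs k) (zs k)
        + g * norm1 (iter_w grad g eta zs k) - L wb (zs k)) - eta ^+ 2 * B
        - 2 * g * eta * norm1 wb)
  + sqnorm (iter_w grad g eta zs T - wb) + 2 * g * eta * norm1 (iter_w grad g eta zs T)
  <= sqnorm wb.
Proof.
move=> hsub hgb hg he; elim=> [|T IH].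
  by rewrite big_ord0 /= sqnorm0N norm10; lra.
rewrite big_ord_recr /=.
set w := iter_w grad g eta zs T in IH *.
set gr := grad w (zs T).
have ha : 0 <= g * eta by apply: mulr_ge0 => //; lra.
have h1 := step_ineq w wb gr eta ha.
have h2 := hsub w wb (zs T).
have h3 := hgb w (zs T).
rewrite -/gr in h2 h3.
have h2' : 2 * eta * (L w (zs T) - L wb (zs T)) <= 2 * eta * dotv gr (w - wb).
  rewrite dotvN; apply: ler_wpM2l; lra.
have h3' : eta ^+ 2 * sqnorm gr <= eta ^+ 2 * (A * L w (zs T) + B).
  by apply: ler_wpM2l => //; apply: sqr_ge0.
set S := \sum_(i < T) _ in IH *.
set s := softT _ _ in h1 *.
lra.
Qed.
End H3.

Section H4.
Variable R : realFieldType.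

Lemma risk_convex d n (L : 'rV[R]_d -> 'rV[R]_d.+1 -> R) (z : 'I_n -> 'rV[R]_d.+1) gam :
  (forall zz : 'rV[R]_d.+1, convex_fun (fun w => L w zz)) -> 0 <= gam ->
  convex_fun (fun w => risk L z w gam).
Proof.
move=> hc hg u v t ht0 ht1; rewrite /risk.
have e1 : \sum_(i < n) L (t *: u + (1 - t) *: v) (z i) <=
   t * \sum_(i < n) L u (z i) + (1 - t) * \sum_(i < n) L v (z i).
  rewrite !mulr_sumr -big_split /=; apply: ler_sum => i _; exact: hc.
have e2 : norm1 (t *: u + (1 - t) *: v) <= t * norm1 u + (1 - t) * norm1 v.
  rewrite /norm1 !mulr_sumr -big_split /=; apply: ler_sum => j _; rewrite !mxE.
  apply: (le_trans (ler_normD _ _)); rewrite !normrM (ger0_norm ht0) (ger0_norm (_ : 0 <= 1 - t)); lra.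
have hq : 0 <= (n%:R : R)^-1 by rewrite invr_ge0.
have e1' := ler_wpM2r hq e1.
have e2' := ler_wpM2l hg e2.
set a := \sum_(i < n) L u (z i) in e1 e1' *.
set b := \sum_(i < n) L v (z i) in e1 e1' *.
set q := n%:R^-1 in e1' *.
rewrite mulrDl -!mulrA in e1'.
lra.
Qed.

Lemma hat_bound d (grad : 'rV[R]_d -> 'rV[R]_d.+1 -> 'rV[R]_d) g eta zs
  (F : 'rV[R]_d -> R) : convex_fun F -> forall k,
  k.+1%:R * F (iter_hat grad g eta zs k) <= \sum_(m < k.+1) F (iter_w grad g eta zs m).
Proof.
move=> hF; elim=> [|k IH].
  by rewrite big_ord1 /= mul1r.
rewrite big_ord_recr /=.
set h := iter_hat grad g eta zs k in IH *.
set w := iter_w grad g eta zs k.+1.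
set N : R := k.+2%:R.
set s := N^-1.
have hN : 0 < N by rewrite /N ltr0n.
have e : N * s = 1 by rewrite /s mulfV // gt_eqF.
have hs0 : 0 <= s by rewrite /s invr_ge0 ltW.
have hs1 : s <= 1 by rewrite /s invf_le1 // /N ler1n.
have eq : h + s *: (w - h) = s *: w + (1 - s) *: h.
  by rewrite scalerBr scalerBl scale1r addrA [h + _]addrC -addrA.
rewrite eq.
have h1 := ler_wpM2l (ltW hN) (hF w h s hs0 hs1).
apply: (le_trans h1).
have e2 : N * (s * F w + (1 - s) * F h) = F w + k.+1%:R * F h.
  rewrite mulrDr !mulrA e mul1r mulrBr mulr1 e.
  by rewrite /N -natr1; congr (_ + _); ring.
rewrite e2; lra.
Qed.
End H4.

Section H5.
Variable R : realFieldType.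

Definition sw1 (n : nat) (a b x : 'I_n) : 'I_n :=
  if x == a then b else if x == b then a else x.

Lemma sw1K n (a b : 'I_n) : involutive (sw1 a b).
Proof.
move=> x; rewrite /sw1.
case: (eqVneq x a) => [->|hxa].
  rewrite eqxx; case: (eqVneq b a) => [->|hba] //; by rewrite eqxx.
case: (eqVneq x b) => [->|hxb]; first by rewrite eqxx.
by rewrite (negbTE hxa) (negbTE hxb).
Qed.

Lemma sw1_eq n (a b x : 'I_n) : (sw1 a b x == b) = (x == a).
Proof.
rewrite /sw1; case: (eqVneq x a) => [_|hxa]; first by rewrite eqxx.
case: (eqVneq x b) => [e|hxb]; first by rewrite -e eq_sym (negbTE hxa).
by rewrite (negbTE hxb).
Qed.
Definition swf (T n : nat) (k : 'I_T) (a b : 'I_n) (f : {ffun 'I_T -> 'I_n}) :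
  {ffun 'I_T -> 'I_n} := [ffun i => if i == k then sw1 a b (f i) else f i].

Lemma swfK T n (k : 'I_T) (a b : 'I_n) : involutive (swf k a b).
Proof.
move=> f; apply/ffunP => i; rewrite !ffunE.
by case: (eqVneq i k) => // _; rewrite sw1K.
Qed.

Lemma indep T n (k : 'I_T) (G : {ffun 'I_T -> 'I_n} -> 'I_n -> R) :
  (forall a b f c, G (swf k a b f) c = G f c) ->
  n%:R * \sum_(f : {ffun 'I_T -> 'I_n}) G f (f k) = \sum_(f : {ffun 'I_T -> 'I_n}) \sum_a G f a.
Proof.
move=> hG.
pose S a c := \sum_(f : {ffun 'I_T -> 'I_n} | f k == a) G f c.
have hS : forall a b c, S a c = S b c.
  move=> a b c; rewrite /S (reindex_inj (can_inj (swfK k b a))) /=.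
  apply: eq_big => f; first by rewrite ffunE eqxx sw1_eq.
  by move=> _; rewrite hG.
have e1 : \sum_(f : {ffun 'I_T -> 'I_n}) G f (f k) = \sum_a S a a.
  rewrite (partition_big (fun f : {ffun 'I_T -> 'I_n} => f k) predT) //=.
  apply: eq_bigr => a _; apply: eq_bigr => f /eqP <-; done.
have e2 : \sum_(f : {ffun 'I_T -> 'I_n}) \sum_a G f a = \sum_a n%:R * S a a.
  rewrite exchange_big /=; apply: eq_bigr => a _.
  rewrite (partition_big (fun f : {ffun 'I_T -> 'I_n} => f k) predT) //=.
  rewrite (eq_bigr (fun _ => S a a)); last by move=> b _; rewrite -(hS b a).
  by rewrite sumr_const card_ord mulr_natl.
by rewrite e1 e2 mulr_sumr.
Qed.
End H5.

Section H6.
Variable R : realFieldType.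

Lemma iter_w_ext d (grad : 'rV[R]_d -> 'rV[R]_d.+1 -> 'rV[R]_d) g eta zs zs' k :
  (forall m, (m < k)%N -> zs m = zs' m) ->
  iter_w grad g eta zs k = iter_w grad g eta zs' k.
Proof.
elim: k => [//|k IH] h /=.
rewrite IH ?h // => m hm; apply: h; exact: ltnW.
Qed.

Lemma data_seq_swf d n T (z : 'I_n -> 'rV[R]_d.+1) (k : 'I_T) a b f m :
  (m < k)%N -> data_seq z (swf k a b f) m = data_seq z f m.
Proof.
move=> hm; rewrite /data_seq; case: insubP => [i _ hi|//].
rewrite ffunE ifN //; apply/eqP => e; move: hm; by rewrite -hi e ltnn.
Qed.

Lemma data_seq_ord d n T (z : 'I_n -> 'rV[R]_d.+1) f (k : 'I_T) :
  data_seq z f k = z (f k).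
Proof.
rewrite /data_seq; case: insubP => [i _ /val_inj -> //|]; by rewrite ltn_ord.
Qed.
End H6.

Unset Implicit Arguments. Set Strict Implicit.
Lemma sum_constR (R : realFieldType) T (x : R) : \sum_(k < T) x = T%:R * x.
Proof. by rewrite sumr_const card_ord mulr_natl. Qed.

Theorem theorem2 (R : realFieldType) (d n : nat)
  (L : 'rV[R]_d -> 'rV[R]_d.+1 -> R)
  (grad : 'rV[R]_d -> 'rV[R]_d.+1 -> 'rV[R]_d)
  (A B : R) (z : 'I_n -> 'rV[R]_d.+1) (g eta : R) :
  (forall zz : 'rV[R]_d.+1, convex_fun (fun w => L w zz)) ->
  (forall (w v : 'rV[R]_d) (zz : 'rV[R]_d.+1),
      L w zz + dotv (grad w zz) (v - w) <= L v zz) ->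
  0 <= A -> 0 <= B ->
  (forall (w : 'rV[R]_d) (zz : 'rV[R]_d.+1),
      sqnorm (grad w zz) <= A * L w zz + B) ->
  (0 < n)%N -> 0 <= g -> 0 < eta -> 0 < 1 - A * eta / 2 ->
  forall (T : nat) (wbar : 'rV[R]_d), (0 < T)%N ->
  let c := 1 - A * eta / 2 in
  let gam := g / c in
  Eunif (fun f : {ffun 'I_T -> 'I_n} =>
           c * risk L z (iter_hat grad g eta (data_seq z f) T.-1) gam)
  <= Eunif (fun f : {ffun 'I_T -> 'I_n} =>
           c / T%:R * \sum_(k < T) risk L z (iter_w grad g eta (data_seq z f) k) gam)
  /\
  Eunif (fun f : {ffun 'I_T -> 'I_n} =>
           c / T%:R * \sum_(k < T) risk L z (iter_w grad g eta (data_seq z f) k) gam)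
  <= eta / 2 * B + sqnorm wbar / (2 * eta * T%:R) + risk L z wbar g.
Proof.
move=> hconv hsub hA hB hgb hn hg he hc T wb hT.
case: T hT => [//|T'] _ c gam.
set T := T'.+1.
have hc0 : 0 < c by [].
have hgam : 0 <= gam by rewrite /gam divr_ge0 // ltW.
have hT0 : 0 < (T%:R : R) by rewrite ltr0n.
have hn0 : 0 < (n%:R : R) by rewrite ltr0n.
set N : R := (n ^ T)%:R.
have hN0 : 0 < N by rewrite /N ltr0n expn_gt0 hn.
have hNi : 0 <= N^-1 by rewrite invr_ge0 ltW.
split.
  rewrite /Eunif; apply: ler_wpM2r => //; apply: ler_sum => f _.
  have hb := hat_bound grad g eta (data_seq z f) (risk_convex z hconv hgam) T'.
  have e : c * risk L z (iter_hat grad g eta (data_seq z f) T') gam =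
    c / T%:R * (T%:R * risk L z (iter_hat grad g eta (data_seq z f) T') gam).
    by field; rewrite gt_eqF.
  rewrite e; apply: ler_wpM2l => //; apply: divr_ge0; [exact: ltW | exact: ltW].

pose W (f : {ffun 'I_T -> 'I_n}) (k : nat) := iter_w grad g eta (data_seq z f) k.
pose Lb := \sum_(a < n) L wb (z a).
pose nw := norm1 wb.
pose K := sqnorm wb + T%:R * (eta ^+ 2 * B + 2 * g * eta * nw).
have hpath : forall f, 2 * eta * \sum_(k < T) (c * L (W f k) (z (f k)) + g * norm1 (W f k)
      - L wb (z (f k))) <= K.
  move=> f; have := @path_bound R d L grad A B g eta (data_seq z f) wb hsub hgb hg he T.
  have e : \sum_(k < T) (2 * eta * ((1 - A * eta / 2) * L (iter_w grad g eta (data_seq z f) k) (data_seq z f k)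
        + g * norm1 (iter_w grad g eta (data_seq z f) k) - L wb (data_seq z f k)) - eta ^+ 2 * B
        - 2 * g * eta * norm1 wb) =
     2 * eta * \sum_(k < T) (c * L (W f k) (z (f k)) + g * norm1 (W f k)
      - L wb (z (f k))) - T%:R * (eta ^+ 2 * B + 2 * g * eta * nw).
    rewrite !sumrB !sum_constR -mulr_sumr.
    rewrite (eq_bigr (fun k : 'I_T => c * L (W f k) (z (f k)) + g * norm1 (W f k)
      - L wb (z (f k)))); last by move=> k _; rewrite data_seq_ord.
    rewrite /nw -sumrB; ring.
  rewrite e /K.
  have h1 := sqnorm_ge0 (iter_w grad g eta (data_seq z f) T - wb).
  have h2 : 0 <= 2 * g * eta * norm1 (iter_w grad g eta (data_seq z f) T).
    by apply: mulr_ge0; [apply: mulr_ge0; [apply: mulr_ge0|]; lra | exact: norm1_ge0].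
  lra.
have hsum : 2 * eta * \sum_f \sum_(k < T) (c * L (W f k) (z (f k)) + g * norm1 (W f k)
      - L wb (z (f k))) <= N * K.
  rewrite mulr_sumr.
  have -> : N * K = \sum_(f : {ffun 'I_T -> 'I_n}) K.
    by rewrite sumr_const card_ffun !card_ord mulr_natl.
  by apply: ler_sum => f _; apply: hpath.
pose Q1 := \sum_(k < T) \sum_(f : {ffun 'I_T -> 'I_n}) L (W f k) (z (f k)).
pose Q1' := \sum_(k < T) \sum_(f : {ffun 'I_T -> 'I_n}) \sum_(a < n) L (W f k) (z a).
pose Q2 := \sum_(f : {ffun 'I_T -> 'I_n}) \sum_(k < T) norm1 (W f k).
pose Q3 := \sum_(k < T) \sum_(f : {ffun 'I_T -> 'I_n}) L wb (z (f k)).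
have eS : \sum_f \sum_(k < T) (c * L (W f k) (z (f k)) + g * norm1 (W f k)
      - L wb (z (f k))) = c * Q1 + g * Q2 - Q3.
  have -> : Q1 = \sum_(f : {ffun 'I_T -> 'I_n}) \sum_(k < T) L (W f k) (z (f k)).
    by rewrite /Q1 exchange_big.
  have -> : Q3 = \sum_(f : {ffun 'I_T -> 'I_n}) \sum_(k < T) L wb (z (f k)).
    by rewrite /Q3 exchange_big.
  rewrite (eq_bigr (fun f => c * \sum_(k < T) L (W f k) (z (f k)) + g * \sum_(k < T) norm1 (W f k)
     - \sum_(k < T) L wb (z (f k)))); last first.
    by move=> f _; rewrite sumrB big_split /= -!mulr_sumr.
  by rewrite sumrB big_split /= -!mulr_sumr.
have hQ1 : n%:R * Q1 = Q1'.
  rewrite /Q1 /Q1' mulr_sumr; apply: eq_bigr => k _.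
  apply: (@indep R T n k (fun f a => L (W f k) (z a))) => a b f c0.
  congr (L _ _); rewrite /W; apply: iter_w_ext => m hm; exact: data_seq_swf.
have hQ3 : n%:R * Q3 = T%:R * (N * Lb).
  rewrite /Q3 mulr_sumr -sum_constR; apply: eq_bigr => k _.
  rewrite (@indep R T n k (fun f a => L wb (z a))) //.
  by rewrite sumr_const card_ffun !card_ord mulr_natl.
rewrite eS in hsum.
have he2 : 0 < 2 * eta by lra.
have hY : c * Q1 + g * Q2 - Q3 <= N * K / (2 * eta).
  by rewrite ler_pdivlMr // mulrC.
have eX : \sum_(f : {ffun 'I_T -> 'I_n}) c / T%:R * \sum_(k < T) risk L z (W f k) gam
    = c / T%:R * (Q1' / n%:R + gam * Q2).
  rewrite -mulr_sumr; congr (_ * _).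
  have -> : Q1' = \sum_(f : {ffun 'I_T -> 'I_n}) \sum_(k < T) \sum_(a < n) L (W f k) (z a).
    by rewrite /Q1' exchange_big.
  rewrite mulr_suml /Q2 mulr_sumr -big_split /=; apply: eq_bigr => f _.
  by rewrite mulr_suml mulr_sumr -big_split.
rewrite /Eunif /= eX -hQ1 /risk -/Lb -/nw.
have hQ3' : Q3 = T%:R * (N * Lb) / n%:R.
  by rewrite -hQ3; field; rewrite gt_eqF.
have eL : c / T%:R * (n%:R * Q1 / n%:R + gam * Q2) / N = (c * Q1 + g * Q2) / (T%:R * N).
  by rewrite /gam; field; rewrite !gt_eqF.
have eR : (N * K / (2 * eta) + T%:R * (N * Lb) / n%:R) / (T%:R * N) =
   eta / 2 * B + sqnorm wb / (2 * eta * T%:R) + (Lb / n%:R + g * nw).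
  by rewrite /K; field; rewrite !gt_eqF.
rewrite eL -eR; apply: ler_wpM2r; first by rewrite invr_ge0 mulr_ge0 // ltW.
rewrite -hQ3'; lra.
Qed.
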